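(* If $Q$ is a Jordan loop of order $9$, then $Q$ is a group (i.e. its multiplication is associative).
   Context: A loop is a set $Q$ with a binary operation $\cdot$ (written by juxtaposition) and a neutral element $e$ such that for all $a,b\in Q$ the equations $ax=b$ and $ya=b$ have unique solutions $x,y\in Q$. A Jordan loop is a commutative loop satisfying the Jordan identity $x^2(yx)=(x^2y)x$ for all $x,y$, where $x^2=xx$. *)

(* Defs.v *)
From mathcomp Require Import all_boot.
Set Implicit Arguments. Unset Strict Implicit. Unset Printing Implicit Defensive.

Definition is_loop (Q : Type) (mul : Q -> Q -> Q) (e : Q) : Prop :=
  (forall x, mul e x = x /\ mul x e = x) /\
  (forall a b, exists! x, mul a x = b) /\
  (forall a b, exists! y, mul y a = b).

Definition is_jordan_loop (Q : Type) (mul : Q -> Q -> Q) (e : Q) : Prop :=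
  is_loop mul e /\
  (forall x y, mul x y = mul y x) /\
  (forall x y, mul (mul x x) (mul y x) = mul (mul (mul x x) y) x).

Definition associative_op (Q : Type) (mul : Q -> Q -> Q) : Prop :=
  forall x y z, mul x (mul y z) = mul (mul x y) z.

(* Main.v *)
Require Import Defs.
From mathcomp Require Import all_boot.
Set Implicit Arguments. Unset Strict Implicit. Unset Printing Implicit Defensive.

Definition tab := seq (seq nat).
Definition get (P : tab) i j := nth 9 (nth [::] P i) j.
Definition set1 (P : tab) i j v : tab := set_nth [::] P i (set_nth 9 (nth [::] P i) j v).
Definition set (P : tab) i j v := set1 (set1 P i j v) j i v.

Definition latin_ok (P : tab) i j v :=
  all (fun k => ((k == j) || (get P i k != v)) && ((k == i) || (get P j k != v))) (iota 0 9).
Definition diag_ok (P : tab) i j v :=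
  (i != j) || all (fun k => (k == i) || (get P k k != v)) (iota 0 9).
Definition chkcell P i j v :=
  latin_ok P i j v && ((i != 1) || (v <= j.+1)) && diag_ok P i j v.

Definition trip := (nat * nat * nat)%type.
Definition inst (P : tab) x y : option (seq trip) :=
  let x2 := get P x x in
  if 9 <= x2 then Some [::] else
  let yx := get P y x in let x2y := get P x2 y in
  if (9 <= yx) || (9 <= x2y) then Some [::] else
  let a := get P x2 yx in let b := get P x2y x in
  if a < 9 then (if b < 9 then (if a == b then Some [::] else None) else Some [:: (x2y, x, a)])
  else (if b < 9 then Some [:: (x2, yx, b)] else Some [::]).

Definition ocat (o1 o2 : option (seq trip)) :=
  match o1 with None => None | Some l1 => match o2 with None => None | Some l2 => Some (l1 ++ l2) end end.

Definition relevant (P : tab) (i j x : nat) :=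
  (x == i) || (x == j) || (get P x x == i) || (get P x x == j).

Definition scan_x (P : tab) x acc := foldr (fun y acc' => ocat (inst P x y) acc') acc (iota 0 9).
Definition scan_step (P : tab) i j x acc := if relevant P i j x then scan_x P x acc else acc.
Definition scanc (P : tab) (i j : nat) : option (seq trip) :=
  foldr (scan_step P i j) (Some [::]) (iota 0 9).

Fixpoint applyf (P : tab) (pend : seq (nat * nat)) (fs : seq trip) : option (tab * seq (nat * nat)) :=
  match fs with
  | [::] => Some (P, pend)
  | (i, j, v) :: fs' =>
    let w := get P i j in
    if w < 9 then (if w == v then applyf P pend fs' else None)
    else let P1 := set P i j v in
      if chkcell P1 i j v then applyf P1 ((i, j) :: pend) fs' else None
  end.

Fixpoint prop (fuel : nat) (P : tab) (pend : seq (nat * nat)) : option tab :=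
  match fuel with
  | 0 => Some P
  | f.+1 => match pend with
    | [::] => Some P
    | (i, j) :: pend' => match scanc P i j with
       | None => None
       | Some fs => match applyf P pend' fs with
          | None => None
          | Some (P1, pend1) => prop f P1 pend1 end end end
  end.

Definition lr (P : tab) x := all (fun y => get P x y < 9) (iota 0 9).
Definition laz (P : tab) x y z := get P x (get P y z) == get P (get P x y) z.
Definition lay (P : tab) x y := all (laz P x y) (iota 0 9).
Definition lax (P : tab) x := all (lay P x) (iota 0 9).
Definition leaf (P : tab) := all (lr P) (iota 0 9) && all (lax P) (iota 0 9).

Definition branch (P : tab) i j (k : tab -> bool) v :=
  let P1 := set P i j v in
  if chkcell P1 i j v then
    match prop 100 P1 [:: (i, j)] with Some P2 => k P2 | None => true end
  else true.

Fixpoint go (cs : seq (nat * nat)) (P : tab) : bool :=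
  match cs with
  | [::] => leaf P
  | (i, j) :: cs' => if get P i j < 9 then go cs' P else all (branch P i j (go cs')) (iota 0 9)
  end.

Definition cells : seq (nat * nat) :=
  flatten [seq [seq (i, j) | j <- iota i (9 - i)] | i <- iota 1 8].
Definition P0 : tab := [seq [seq (if i == 0 then j else if j == 0 then i else 9) | j <- iota 0 9] | i <- iota 0 9].

Lemma search_ok : go cells P0 = true.
Proof. vm_cast_no_check (erefl true). Qed.

Arguments chkcell : simpl never.
Arguments get : simpl never.
Arguments set : simpl never.
Arguments scanc : simpl never.
Arguments leaf : simpl never.
Arguments branch : simpl never.

Section Sound.
Variable T : nat -> nat -> nat.
Hypothesis V1 : forall i j, i < 9 -> j < 9 -> T i j < 9.
Hypothesis V2 : forall i j, T i j = T j i.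
Hypothesis V4 : forall i j k, i < 9 -> j < 9 -> k < 9 -> T i j = T i k -> j = k.
Hypothesis V5 : forall x y, x < 9 -> y < 9 -> T (T x x) (T y x) = T (T (T x x) y) x.
Hypothesis V6 : forall j, j < 9 -> T 1 j <= j.+1.
Hypothesis V7 : forall i k, i < 9 -> k < 9 -> T i i = T k k -> i = k.

Definition agree (P : tab) := forall i j, i < 9 -> j < 9 -> get P i j < 9 -> get P i j = T i j.

Lemma get_set1 P i j v x y : get (set1 P i j v) x y = if (x == i) && (y == j) then v else get P x y.
Proof.
rewrite /get /set1 nth_set_nth /=; case: (x =P i) => [->|//] /=.
by rewrite nth_set_nth /=; case: (y == j).
Qed.

Lemma agree_set P i j : i < 9 -> j < 9 -> agree P -> agree (set P i j (T i j)).
Proof.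
move=> hi hj hA x y hx hy; rewrite /set !get_set1.
case: ifP => [/andP[/eqP -> /eqP ->] _|_]; first by rewrite V2.
case: ifP => [/andP[/eqP -> /eqP ->] _|_] //; exact: hA.
Qed.

Lemma in_iota9 k : (k \in iota 0 9) = (k < 9).
Proof. by rewrite mem_iota. Qed.

Lemma chkcell_sound P i j : i < 9 -> j < 9 -> agree P -> chkcell P i j (T i j) = true.
Proof.
move=> hi hj hA; rewrite /chkcell.
have -> : latin_ok P i j (T i j).
  apply/allP=> k; rewrite in_iota9 => hk /=; apply/andP; split.
    case: (get P i k =P T i j) => [E|]; last by rewrite orbT.
    have := hA i k hi hk; rewrite E V1 // => /(_ isT) E2.
    by rewrite (V4 hi hk hj (esym E2)) eqxx.
  case: (get P j k =P T i j) => [E|]; last by rewrite orbT.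
  have := hA j k hj hk; rewrite E V1 // => /(_ isT) E2.
  by rewrite V2 in E2; rewrite (V4 hj hk hi (esym E2)) eqxx.
have -> : (i != 1) || (T i j <= j.+1).
  by case: (i =P 1) => [->|] //=; rewrite V6.
rewrite /diag_ok; case: (i =P j) => [Eij|//]; rewrite -Eij; apply/orP; right.
apply/allP=> k; rewrite in_iota9 => hk /=.
case: (get P k k =P T i i) => [E|]; last by rewrite orbT.
have := hA k k hk hk; rewrite E V1 // => /(_ isT) E2.
by rewrite (V7 hk hi (esym E2)) eqxx.
Qed.

Definition tok (t : trip) := [/\ t.1.1 < 9, t.1.2 < 9 & t.2 = T t.1.1 t.1.2].

Lemma inst_sound P x y : x < 9 -> y < 9 -> agree P ->
  exists2 l, inst P x y = Some l & forall t, t \in l -> tok t.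
Proof.
move=> hx hy hA; rewrite /inst.
case: (ltnP (get P x x) 9) => h2 /=; last by exists [::].
case: (ltnP (get P y x) 9) => h3 /=; last by exists [::].
case: (ltnP (get P (get P x x) y) 9) => h4 /=; last by exists [::].
have e4 := hA _ _ h2 hy h4.
have e5 : forall v, get P (get P x x) (get P y x) = v -> v < 9 -> v = T (T (get P x x) y) x.
  move=> v <- h5; rewrite (hA _ _ h2 h3 h5) (hA _ _ hy hx h3) (hA _ _ hx hx h2); exact: V5.
have e6 : forall v, get P (get P (get P x x) y) x = v -> v < 9 -> v = T (T (get P x x) y) x.
  by move=> v <- h6; rewrite (hA _ _ h4 hx h6) e4.
case: (ltnP (get P (get P x x) (get P y x)) 9) => h5;
  case: (ltnP (get P (get P (get P x x) y) x) 9) => h6 /=.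
- by rewrite (e5 _ erefl h5) (e6 _ erefl h6) eqxx; exists [::].
- exists [:: (get P (get P x x) y, x, get P (get P x x) (get P y x))] => // t.
  by rewrite inE => /eqP -> /=; split => //; rewrite (e5 _ erefl h5) e4.
- exists [:: (get P x x, get P y x, get P (get P (get P x x) y) x)] => // t.
  rewrite inE => /eqP -> /=; split => //.
  by rewrite (e6 _ erefl h6) (hA _ _ hy hx h3) (hA _ _ hx hx h2) V5.
- by exists [::].
Qed.

Definition good (o : option (seq trip)) := exists2 l, o = Some l & forall t, t \in l -> tok t.

Lemma ocat_good o1 o2 : good o1 -> good o2 -> good (ocat o1 o2).
Proof.
move=> [l1 -> h1] [l2 -> h2]; exists (l1 ++ l2) => // t.
by rewrite mem_cat => /orP[]; [apply: h1|apply: h2].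
Qed.

Lemma foldr_good (A : Type) (F : nat -> A -> A) (G : A -> option (seq trip)) acc xs :
  (forall x a, x < 9 -> good (G a) -> good (G (F x a))) -> good (G acc) ->
  all (fun x => x < 9) xs -> good (G (foldr F acc xs)).
Proof.
move=> hF hacc; elim: xs => [|x xs IH] //= /andP[hx hxs].
by apply: hF => //; exact: IH.
Qed.

Lemma scanc_sound P i j : agree P -> good (scanc P i j).
Proof.
move=> hA; rewrite /scanc; apply: (foldr_good (G := id)) => //; last by exists [::].
move=> x acc hx hacc; rewrite /scan_step; case: ifP => _ //.
rewrite /scan_x; apply: (foldr_good (G := id)) => // y a hy ha.
apply: ocat_good => //.
by have [l hl hl2] := inst_sound hx hy hA; exists l.
Qed.

Lemma applyf_sound fs P pend : agree P -> (forall t, t \in fs -> tok t) ->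
  exists P' pend', applyf P pend fs = Some (P', pend') /\ agree P'.
Proof.
elim: fs P pend => [|[[i j] v] fs IH] P pend hA hfs; first by exists P, pend.
have [/= hi hj hv] := hfs _ (mem_head _ _).
have hfs' : forall t, t \in fs -> tok t by move=> t ht; apply: hfs; rewrite inE ht orbT.
rewrite /= hv; case: (ltnP (get P i j) 9) => hw.
  by rewrite (hA _ _ hi hj hw) eqxx; apply: IH.
rewrite chkcell_sound //; last exact: agree_set.
by apply: IH => //; apply: agree_set.
Qed.

Lemma prop_sound fuel P pend : agree P -> exists P', prop fuel P pend = Some P' /\ agree P'.
Proof.
elim: fuel P pend => [|f IH] P pend hA; first by exists P.
case: pend => [|[i j] pend]; first by exists P.
have -> : prop f.+1 P ((i, j) :: pend) = match scanc P i j with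
       | None => None
       | Some fs => match applyf P pend fs with
          | None => None
          | Some (P1, pend1) => prop f P1 pend1 end end by [].
have [fs -> hfs] := scanc_sound i j hA.
have [P1 [pend1 [-> hA1]]] := applyf_sound pend hA hfs.
exact: IH.
Qed.

Lemma leaf_sound P : agree P -> leaf P = true ->
  forall x y z, x < 9 -> y < 9 -> z < 9 -> T x (T y z) = T (T x y) z.
Proof.
move=> hA /andP[/allP hd /allP ha] x y z hx hy hz.
have hg : forall a b, a < 9 -> b < 9 -> get P a b = T a b.
  move=> a b ha' hb; apply: hA => //.
  have := hd a; rewrite in_iota9 => /(_ ha'); rewrite /lr => /allP /(_ b).
  by rewrite in_iota9 => /(_ hb).
have := ha x; rewrite in_iota9 => /(_ hx); rewrite /lax => /allP /(_ y).
rewrite in_iota9 => /(_ hy); rewrite /lay => /allP /(_ z).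
rewrite in_iota9 => /(_ hz); rewrite /laz => /eqP.
by rewrite (hg y z) // (hg x y) // !hg ?V1.
Qed.

Lemma go_sound cs P : all (fun c => (c.1 < 9) && (c.2 < 9)) cs -> agree P -> go cs P = true ->
  forall x y z, x < 9 -> y < 9 -> z < 9 -> T x (T y z) = T (T x y) z.
Proof.
elim: cs P => [|[i j] cs IH] P; first by move=> _; exact: leaf_sound.
move=> /andP[/andP[hi hj] hc] hA.
have -> : go ((i, j) :: cs) P =
  if get P i j < 9 then go cs P else all (branch P i j (go cs)) (iota 0 9) by [].
case: ifP => _; first exact: IH.
move=> /allP /(_ (T i j)); rewrite in_iota9 V1 // => /(_ isT).
rewrite /branch chkcell_sound //; last exact: agree_set.
have [P2 [-> hA2]] := prop_sound 100 [:: (i, j)] (agree_set hi hj hA).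
exact: IH.
Qed.

End Sound.

Lemma cells_ok : all (fun c => (c.1 < 9) && (c.2 < 9)) cells.
Proof. by []. Qed.

Lemma getP0 i j : i < 9 -> j < 9 -> get P0 i j = if i == 0 then j else if j == 0 then i else 9.
Proof.
move=> hi hj; rewrite /get /P0 (nth_map 0) ?size_iota // (nth_map 0) ?size_iota //.
by rewrite !nth_iota.
Qed.

Section Inv.
Variables (X : finType) (s : X -> X).
Hypothesis sK : involutive s.
Hypothesis sF : forall x, s x != x.

Lemma even_closed n : forall A : {set X}, #|A| = n -> (forall x, x \in A -> s x \in A) -> ~~ odd n.
Proof.
elim/ltn_ind: n => n IH A hA hcl.
case: (set_0Vmem A) => [E | [x hx]]; first by rewrite -hA E cards0.
have hsx : s x \in A :\ x by rewrite in_setD1 sF hcl.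
have hc : n = #|A :\ x :\ s x|.+2.
  by rewrite -hA (cardsD1 x A) hx (cardsD1 (s x) (A :\ x)) hsx.
have hB : forall y, y \in A :\ x :\ s x -> s y \in A :\ x :\ s x.
  move=> y; rewrite !in_setD1 => /and3P[h1 h2 h3].
  rewrite hcl // andbT; apply/andP; split.
    by apply: contra h2 => /eqP /(congr1 s); rewrite !sK => ->.
  by apply: contra h1 => /eqP <-; rewrite sK.
have := IH #|A :\ x :\ s x| _ (A :\ x :\ s x) erefl hB.
by rewrite hc /= negbK; apply; rewrite ltnS leqnSn.
Qed.
End Inv.

Section Main.
Variables (Q : finType) (mul : Q -> Q -> Q) (e : Q).
Hypothesis h9 : #|Q| = 9.
Hypothesis hJ : is_jordan_loop mul e.

Lemma hid x : mul e x = x /\ mul x e = x.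
Proof. by case: hJ => [[]]. Qed.
Lemma hcomm x y : mul x y = mul y x.
Proof. by case: hJ => _ []. Qed.
Lemma hjor x y : mul (mul x x) (mul y x) = mul (mul (mul x x) y) x.
Proof. by case: hJ => _ []. Qed.
Lemma hcanc a x y : mul a x = mul a y -> x = y.
Proof.
case: hJ => [[_ [hl _]] _] E.
have [z [_ hz]] := hl a (mul a x).
by rewrite -(hz x erefl) -(hz y (esym E)).
Qed.
Lemma hsol a b : exists x, mul a x = b.
Proof. by case: hJ => [[_ [hl _]] _]; have [x [hx _]] := hl a b; exists x. Qed.

Lemma sq_surj z : exists x, mul x x = z.
Proof.
case: (pickP (fun x => mul x x == z)) => [x /eqP hx|hn]; first by exists x.
pose sg x := odflt x [pick y | mul x y == z].
have hsg : forall x, mul x (sg x) = z.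
  move=> x; rewrite /sg; case: pickP => [y /eqP //|hn2].
  by have [y hy] := hsol x z; have := hn2 y; rewrite hy eqxx.
have sK : involutive sg.
  by move=> x; apply: (hcanc (a := sg x)); rewrite hsg hcomm hsg.
have sF : forall x, sg x != x.
  by move=> x; apply/eqP => E; have := hn x; rewrite -{2}E hsg eqxx.
have := even_closed sK sF (A := [set: Q]) erefl.
by rewrite cardsT h9 => /(_ (fun x _ => in_setT _)).
Qed.

Lemma sq_inj x y : mul x x = mul y y -> x = y.
Proof.
pose r z := odflt e [pick x | mul x x == z].
have hr : cancel r (fun x => mul x x).
  move=> z; rewrite /r; case: pickP => [w /eqP //|hn].
  by have [w hw] := sq_surj z; have := hn w; rewrite hw eqxx.
have rb : bijective r by apply: injF_bij; exact: can_inj hr.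
have hc : cancel (fun x => mul x x) r by apply/(bij_can_sym rb).
exact: (can_inj hc).
Qed.

Definition pa : Q := odflt e [pick x | x != e].

Lemma pa_ne : pa != e.
Proof.
rewrite /pa; case: pickP => [x //|hn].
have : #|Q| <= 1.
  rewrite -(card1 e); apply: subset_leq_card; apply/subsetP => x _.
  by rewrite inE; have := hn x => /negbFE.
by rewrite h9.
Qed.
Definition step (s : seq Q) : seq Q :=
  let nx := mul pa (last e s) in
  if nx \in s then rcons s (head e [seq x <- enum Q | x \notin s]) else rcons s nx.

Definition it k := iter k step [:: e].

Lemma size_it k : size (it k) = k.+1.
Proof. by elim: k => //= k IH; rewrite /step; case: ifP; rewrite size_rcons IH. Qed.

Lemma uniq_it k : k <= 8 -> uniq (it k).
Proof.
elim: k => // k IH hk; rewrite /= /step -/(it k).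
have u := IH (ltnW hk).
case: ifP => hin; rewrite rcons_uniq u andbT //; last by rewrite hin.
set F := [seq x <- enum Q | x \notin it k].
case hF: F => [|y F'] /=.
  have : #|Q| <= size (it k).
    rewrite -(card_uniqP u); apply: subset_leq_card; apply/subsetP => x _.
    have : x \notin F by rewrite hF.
    by rewrite mem_filter mem_enum andbT negbK.
  by rewrite h9 size_it ltnNge hk.
have : y \in F by rewrite hF mem_head.
by rewrite mem_filter => /andP[].
Qed.

Lemma it_cat i d : exists t, it (i + d) = it i ++ t.
Proof.
elim: d => [|d [t IH]]; first by exists [::]; rewrite addn0 cats0.
rewrite addnS /= /step -/(it (i + d)) IH.
by case: ifP => _; [exists (rcons t (head e [seq x <- enum Q | x \notin it i ++ t]))|
  exists (rcons t (mul pa (last e (it i ++ t))))]; rewrite -rcons_cat.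
Qed.

Definition l := it 8.

Lemma it_pre i : i <= 8 -> exists t, l = it i ++ t.
Proof. by move=> hi; have := it_cat i (8 - i); rewrite subnKC. Qed.

Lemma uniq_l : uniq l.
Proof. exact: uniq_it. Qed.
Lemma size_l : size l = 9.
Proof. exact: size_it. Qed.

Lemma mem_l x : x \in l.
Proof.
have : #|[pred y in l]| = #|Q| by rewrite (card_uniqP uniq_l) size_l h9.
move=> /subset_cardP; rewrite subset_predT => /(_ isT) H.
by have := H x; rewrite !inE.
Qed.

Definition g i := nth e l i.
Definition f x := index x l.
Lemma gf x : g (f x) = x.
Proof. exact: nth_index (mem_l x). Qed.
Lemma fg i : i < 9 -> f (g i) = i.
Proof. by move=> hi; rewrite /f /g index_uniq ?size_l // uniq_l. Qed.
Lemma f_lt x : f x < 9.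
Proof. by rewrite /f -size_l index_mem mem_l. Qed.

Definition T i j := f (mul (g i) (g j)).

Lemma gT i j : g (T i j) = mul (g i) (g j).
Proof. exact: gf. Qed.

Lemma g0 : g 0 = e.
Proof. by rewrite /g; have [t ->] := it_pre (isT : 0 <= 8). Qed.

Lemma g1 : g 1 = pa.
Proof.
rewrite /g; have [t ->] := it_pre (isT : 1 <= 8); rewrite /it /= /step /=.
rewrite (hid pa).2 inE (negbTE pa_ne) /=.
by [].
Qed.

Lemma row1 j : j < 9 -> T 1 j <= j.+1.
Proof.
move=> hj; case: (ltnP j 8) => hj8; last first.
  by apply: leq_trans (ltnW (f_lt _)) _; rewrite ltnS.
have [t Hl] := it_pre (hj8 : j.+1 <= 8).
have [t0 Hl0] := it_pre (ltnW hj8).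
have hgj : g j = last e (it j).
  rewrite /g Hl0 nth_cat size_it ltnSn -nth_last size_it //.
rewrite /T g1 hgj /f.
move: Hl; rewrite /= /step -/(it j).
case: ifP => hin; rewrite -cats1 -catA => ->; rewrite index_cat.
  by rewrite hin; apply: ltnW; move: hin; rewrite -index_mem size_it.
by rewrite hin /= eqxx addn0 size_it.
Qed.

Lemma V_all : forall x y z, x < 9 -> y < 9 -> z < 9 -> T x (T y z) = T (T x y) z.
Proof.
apply: (go_sound (T := T)) cells_ok _ search_ok.
- by move=> i j _ _; exact: f_lt.
- by move=> i j; rewrite /T hcomm.
- move=> i j k hi hj hk E.
  have : g (T i j) = g (T i k) by rewrite E.
  by rewrite !gT => /hcanc /(congr1 f); rewrite !fg.
- move=> x y _ _; rewrite -[LHS]fg ?f_lt // -[RHS]fg ?f_lt //; congr f; rewrite !gT; exact: hjor.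
- exact: row1.
- move=> i k hi hk E.
  have : g (T i i) = g (T k k) by rewrite E.
  by rewrite !gT => /sq_inj /(congr1 f); rewrite !fg.
- move=> i j hi hj; rewrite getP0 //.
  case: (i =P 0) => [->|_]; first by rewrite /T g0 (hid _).1 fg.
  by case: (j =P 0) => [->|_]; first by rewrite /T g0 (hid _).2 fg.
Qed.

End Main.

Theorem theorem3p9 (Q : finType) (mul : Q -> Q -> Q) (e : Q) :
  #|Q| = 9 -> is_jordan_loop mul e -> associative_op mul.
Proof.
move=> h9 hJ x y z.
have V := V_all h9 hJ (f_lt mul e h9 x) (f_lt mul e h9 y) (f_lt mul e h9 z).
have := congr1 (g mul e) V.
by rewrite !(gT mul e h9) !(gf mul e h9).
Qed.
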